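(* Let $\Gamma$ be a finite alphabet and $n\ge2$, and fix a bijection between $\Gamma^{n-1}$ and $\{1,\dots,|\Gamma|^{n-1}\}$ giving one-hot encodings $\mathbb 1(g_1\cdots g_{n-1})\in\{0,1\}^{|\Gamma|^{n-1}}$. There exists a function $F=M\circ N$, where $N(a)=a/\|a\|_1$ and $M$ is a ReLU MLP, such that for every string $w=w_1\cdots w_T\in\Gamma^T$ and every $s$ with $n-1\le s\le T$, $$F(A_s)=\mathbb 1(w_{s-n+2}\cdots w_s),$$ the one-hot encoding of the last $n-1$ symbols up to position $s$.
   Context: Let $\mathbb 1(g)\in\{0,1\}^{|\Gamma|}$ be the one-hot encoding of $g\in\Gamma$, and for $n-1\le s\le T$ let $A_s=\frac{1}{n-1}\sum_{j=s-n+2}^{s}10^{-j}\mathbb 1(w_j)$ (the output at position $s$ of a single hard-attention head that attends uniformly to the last $n-1$ positions with values $10^{-j}\mathbb 1(w_j)$). A ReLU MLP with $k$ hidden layers is a map $x\mapsto W_{k+1}\,\mathrm{ReLU}(W_k\cdots\mathrm{ReLU}(W_1x+b_1)\cdots+b_k)+b_{k+1}$ with real matrices $W_i$ and vectors $b_i$, where $\mathrm{ReLU}$ acts entrywise as $\max(0,\cdot)$. *)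

(* Defs.v *)
From HB Require Import structures.
From mathcomp Require Import all_boot all_order all_algebra.
From mathcomp Require Import reals.
Set Implicit Arguments. Unset Strict Implicit. Unset Printing Implicit Defensive.
Import Order.TTheory GRing.Theory Num.Theory.
Local Open Scope ring_scope.

Section Defs.
Variable R : realType.

Definition relu {m} (x : 'cV[R]_m) : 'cV[R]_m := map_mx (fun t => Num.max t 0) x.

Inductive mlp : nat -> nat -> Type :=
| mlp_one a h b : 'M[R]_(h, a) -> 'cV[R]_h -> 'M[R]_(b, h) -> 'cV[R]_b -> mlp a b
| mlp_cons a h b : 'M[R]_(h, a) -> 'cV[R]_h -> mlp h b -> mlp a b.

Fixpoint mlp_eval a b (M : mlp a b) : 'cV[R]_a -> 'cV[R]_b :=
  match M in mlp a b return 'cV[R]_a -> 'cV[R]_b with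
  | mlp_one _ _ _ W1 b1 W2 b2 => fun x => W2 *m relu (W1 *m x + b1) + b2
  | mlp_cons _ _ _ W c M' => fun x => mlp_eval M' (relu (W *m x + c))
  end.

Definition l1norm {m} (x : 'cV[R]_m) : R := \sum_i `|x i 0|.
Definition l1normalize {m} (x : 'cV[R]_m) : 'cV[R]_m := (l1norm x)^-1 *: x.

Definition onehot {m} (i : 'I_m) : 'cV[R]_m := \col_j (j == i)%:R.

Definition onehotG (Gamma : finType) (g : Gamma) : 'cV[R]_#|Gamma| :=
  onehot (enum_rank g).

(* A_s for w = w_1 ... w_T (w_j = tnth w (j-1), i.e. 0-based index i = j-1):
   A_s = 1/(n-1) * sum_{j=s-n+2}^{s} 10^{-j} 1(w_j). *)
Definition attnA (Gamma : finType) (n T : nat) (w : T.-tuple Gamma) (s : nat)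
  : 'cV[R]_#|Gamma| :=
  (n.-1)%:R^-1 *: \sum_(i < T | (s.+2 - n <= i.+1 <= s)%N)
      ((10%:R : R) ^- i.+1) *: onehotG (tnth w i).

End Defs.

(* Main.v *)
Require Import Defs.
From HB Require Import structures.
From mathcomp Require Import all_boot all_order all_algebra.
From mathcomp Require Import reals.
From mathcomp Require Import zify.
Import Order.TTheory GRing.Theory Num.Theory.
Local Open Scope ring_scope.

Lemma maxabs (R : realType) (y : R) : Num.max y 0 + Num.max (- y) 0 = `|y|.
Proof.
rewrite !maxElt oppr_lt0.
have [y0|y0] := ltP y 0.
  by rewrite ltr0_norm // add0r ltNge (ltW y0).
rewrite ger0_norm //; case: ltP => [_|h]; first by rewrite addr0.
have -> : y = 0 by apply/eqP; rewrite eq_le h y0.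
by rewrite oppr0 addr0.
Qed.

Definition dist1 {R : realType} {a} (x y : 'cV[R]_a) := \sum_g `|x g 0 - y g 0|.

Lemma onehot_sum {R : realType} {a} (c : 'I_a -> R) (k : 'I_a) (x : 'cV[R]_a) :
  \sum_g (c g * (g == k)%:R) * x g 0 = c k * x k 0.
Proof.
rewrite (bigD1 k) //= eqxx mulr1 big1 ?addr0 // => g /negbTE ->.
by rewrite mulr0 mul0r.
Qed.

Lemma interp (R : realType) (U : finType) a b (p : U -> 'cV[R]_a)
  (pinj : injective p) (dec : 'I_b -> U) :
  exists M : mlp R a b, forall u j, mlp_eval M (p u) j 0 = (dec j == u)%:R.
Proof.
pose T1 := (U * 'I_a * bool)%type.
pose C := \sum_(pr : U * U | pr.1 != pr.2) (dist1 (p pr.1) (p pr.2))^-1.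
pose W1 : 'M[R]_(#|{: T1}|, a) := \matrix_(i, g)
   ((if (enum_val i).2 then 1 else -1) * (g == (enum_val i).1.2)%:R).
pose b1 : 'cV[R]_(#|{: T1}|) := \col_i
   ((if (enum_val i).2 then -1 else 1) * p (enum_val i).1.1 (enum_val i).1.2 0).
pose W2 : 'M[R]_(b, #|{: T1}|) := \matrix_(j, i) (- C * ((enum_val i).1.1 == dec j)%:R).
pose b2 : 'cV[R]_b := const_mx 1.
exists (mlp_cons W1 b1 (mlp_one W2 b2 1%:M 0)) => u j /=.
have key : forall x : 'cV[R]_a, (W2 *m relu (W1 *m x + b1)) j 0 = - C * dist1 x (p (dec j)).
  move=> x; rewrite mxE.
  rewrite (reindex (@enum_rank T1)) /=; last by apply: onW_bij; apply: enum_rank_bij.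
  under eq_bigr => t _.
    rewrite !mxE enum_rankK.
    under eq_bigr => g _ do rewrite /W1 mxE enum_rankK.
    rewrite (onehot_sum (fun _ => if t.2 then 1 else -1)).
    over.
  transitivity (\sum_(ug : U * 'I_a) \sum_(bb : bool)
     (- C * (ug.1 == dec j)%:R * Num.max ((if bb then 1 else -1) * x ug.2 0 +
        (if bb then -1 else 1) * p ug.1 ug.2 0) 0)).
    by rewrite pair_bigA.
  transitivity (\sum_(uu : U) \sum_(g : 'I_a) \sum_(bb : bool)
     (- C * (uu == dec j)%:R * Num.max ((if bb then 1 else -1) * x g 0 +
        (if bb then -1 else 1) * p uu g 0) 0)).
    by rewrite [RHS]pair_bigA.
  rewrite (bigD1 (dec j)) //= [X in _ + X]big1 ?addr0; last first.
    by move=> uu /negbTE; rewrite eq_sym => ->; apply: big1 => g _; apply: big1 => bb _; rewrite mulr0 mul0r.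
  rewrite /dist1 mulr_sumr; apply: eq_bigr => g _.
  rewrite big_bool /= eqxx mulr1 -mulrDr; congr (_ * _).
  by rewrite !mul1r !mulN1r -maxabs opprB [- x g 0 + _]addrC.
rewrite mul1mx addr0 /relu mxE mxE key /b2 mxE.
have d0 : forall x y : 'cV[R]_a, 0 <= dist1 x y.
  by move=> x y; apply: sumr_ge0 => g _.
have [<-|ne] := eqVneq (dec j) u.
  have -> : dist1 (p (dec j)) (p (dec j)) = 0.
    by apply: big1 => g _; rewrite subrr normr0.
  by rewrite mulr0 add0r maxElt ltr10.
have dpos : 0 < dist1 (p u) (p (dec j)).
  rewrite lt_neqAle d0 andbT; apply/negP => /eqP /esym /psumr_eq0P H.
  move/negP: ne; apply; apply/eqP; apply: pinj; apply/matrixP => g k.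
  rewrite (ord1 k); apply/eqP; rewrite eq_sym -subr_eq0 -normr_eq0; apply/eqP.
  by apply: H.
have Cge : (dist1 (p u) (p (dec j)))^-1 <= C.
  rewrite /C (bigD1 (u, dec j)) /=; last by rewrite eq_sym.
  rewrite lerDl; apply: sumr_ge0 => pr _; rewrite invr_ge0 d0 //.
have : 1 <= C * dist1 (p u) (p (dec j)).
  rewrite -(mulVf (lt0r_neq0 dpos)) ler_pM2r //.
move=> h.
have hle : - C * dist1 (p u) (p (dec j)) + 1 <= 0.
  by rewrite mulNr addrC subr_le0.
rewrite maxElt; case: ltP => // h2.
by apply/eqP; rewrite eq_le hle h2.
Qed.

Section Spec.
Variables (R : realType) (Gamma : finType).

Definition Pf (s : seq Gamma) : 'cV[R]_#|Gamma| :=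
  foldr (fun g acc => onehotG R g + (10%:R^-1 : R) *: acc) 0 s.

Lemma Pf_cons a s i : Pf (a :: s) i 0 = (i == enum_rank a)%:R + 10%:R^-1 * Pf s i 0.
Proof. by rewrite /= !mxE. Qed.

Lemma Pf_nil i : Pf [::] i 0 = 0.
Proof. by rewrite /= mxE. Qed.

Lemma Pf_ge0 s i : 0 <= Pf s i 0.
Proof.
elim: s => [|a s IH]; first by rewrite Pf_nil.
by rewrite Pf_cons addr_ge0 // mulr_ge0 // invr_ge0 ler0n.
Qed.

Lemma Pf_lt2 s i : Pf s i 0 < 2.
Proof.
elim: s => [|a s IH]; first by rewrite Pf_nil.
rewrite Pf_cons.
have h1 : (i == enum_rank a)%:R <= 1 :> R by case: eqP.
have h2 : 10%:R^-1 * Pf s i 0 < 1.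
  rewrite ltr_pdivrMl ?ltr0n // mulr1; apply: lt_le_trans IH _; rewrite ler_nat //.
have : (i == enum_rank a)%:R + 10%:R^-1 * Pf s i 0 < 1 + 1 := ler_ltD h1 h2.
by [].
Qed.

Lemma Pf_inj s s' : size s = size s' -> Pf s = Pf s' -> s = s'.
Proof.
elim: s s' => [|a s IH] [|a' s'] //= [hs] E.
have E' : Pf (a :: s) = Pf (a' :: s') := E.
have Ei : forall i, Pf (a :: s) i 0 = Pf (a' :: s') i 0 by move=> i; rewrite E'.
have ea : a = a'.
  apply/eqP/negP => /negP ne.
  have := Ei (enum_rank a); rewrite !Pf_cons eqxx.
  have -> : (enum_rank a == enum_rank a') = false.
    by apply/negbTE; apply: contra ne => /eqP /enum_rank_inj ->.
  move=> h.
  have h2 : 10%:R^-1 * Pf s' (enum_rank a) 0 < 1.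
    rewrite ltr_pdivrMl ?ltr0n // mulr1; apply: lt_le_trans (Pf_lt2 _ _) _; rewrite ler_nat //.
  have : 1 <= false%:R + 10%:R^-1 * Pf s' (enum_rank a) 0.
    by rewrite -h lerDl mulr_ge0 // ?invr_ge0 ?ler0n // Pf_ge0.
  by rewrite add0r leNgt h2.
subst a'; congr (_ :: _); apply: IH => //.
apply/matrixP => i k; rewrite (ord1 k).
have := Ei i; rewrite !Pf_cons => /addrI /(mulfI _) -> //.
by rewrite invr_eq0 pnatr_eq0.
Qed.

Lemma Pf_sum x0 s : Pf s = \sum_(0 <= k < size s) ((10%:R^-1 : R)^+k) *: onehotG R (nth x0 s k).
Proof.
elim: s => [|a s IH]; first by rewrite big_geq.
rewrite big_nat_recl //= expr0 scale1r.
change (onehotG R a + 10%:R^-1 *: Pf s = onehotG R a +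
  \sum_(0 <= i < size s) (10%:R^-1)^+i.+1 *: onehotG R (nth x0 s i)).
congr (_ + _).
rewrite IH scaler_sumr; apply: eq_bigr => k _.
by rewrite scalerA exprS.
Qed.

Definition sumE {m} (v : 'cV[R]_m) := \sum_i v i 0.

Lemma l1_Pf s : l1norm (Pf s) = sumE (Pf s).
Proof. by apply: eq_bigr => i _; rewrite ger0_norm // Pf_ge0. Qed.

Lemma sumE_cons a s : sumE (Pf (a :: s)) = 1 + 10%:R^-1 * sumE (Pf s).
Proof.
rewrite /sumE; under eq_bigr => i _ do rewrite Pf_cons.
rewrite big_split /= mulr_sumr; congr (_ + _).
rewrite (bigD1 (enum_rank a)) //= eqxx big1 ?addr0 // => i /negbTE -> //.
Qed.

Lemma sumE_size s s' : size s = size s' -> sumE (Pf s) = sumE (Pf s').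
Proof.
elim: s s' => [|a s IH] [|a' s'] //= [hs].
by rewrite !sumE_cons (IH s').
Qed.

Lemma sumE_pos s : s <> [::] -> 0 < sumE (Pf s).
Proof.
case: s => [//|a s _]; rewrite sumE_cons.
apply: lt_le_trans (ltr01) _; rewrite lerDl mulr_ge0 // ?invr_ge0 ?ler0n //.
by apply: sumr_ge0 => i _; apply: Pf_ge0.
Qed.

End Spec.

Lemma l1normalizeZ (R : realType) m (c : R) (v : 'cV[R]_m) :
  0 < c -> l1normalize (c *: v) = l1normalize v.
Proof.
move=> c0; rewrite /l1normalize.
have -> : l1norm (c *: v) = c * l1norm v.
  rewrite /l1norm mulr_sumr; apply: eq_bigr => i _.
  by rewrite mxE normrM gtr0_norm.
rewrite scalerA invfM mulrAC mulVf ?mul1r //; exact: lt0r_neq0.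
Qed.

Lemma attn_Pf (R : realType) (Gamma : finType) n T (w : T.-tuple Gamma) s (u : seq Gamma) :
  (2 <= n)%N -> (n.-1 <= s)%N -> (s <= T)%N -> u = take n.-1 (drop (s.+1 - n) w) ->
  attnA R n w s = ((n.-1)%:R^-1 * 10%:R ^- (s.+1 - n).+1) *: Pf R Gamma u.
Proof.
move=> hn h1 h2 hu.
have hT : (0 < T)%N by apply: leq_trans h2; lia.
pose x0 := tnth w (Ordinal hT).
set a := (s.+1 - n)%N.
have hs : s = (a + n.-1)%N by rewrite /a; lia.
rewrite /attnA -scalerA; congr (_ *: _).
under eq_bigr => i _ do rewrite (tnth_nth x0).
rewrite -(big_mkord (fun i => (s.+2 - n <= i.+1 <= s)%N)
   (fun i => (10%:R : R) ^- i.+1 *: onehotG R (nth x0 w i))).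
rewrite (eq_bigl (fun i => (a <= i)%N && (i < s)%N)); last first.
  by move=> i /=; rewrite /a; apply/idP/idP => /andP[p q]; apply/andP; split; lia.
rewrite -(big_nat_widen 0 s T (fun i => (a <= i)%N)) //.
rewrite (big_cat_nat (n:=a)) //=; last by rewrite hs leq_addr.
rewrite big_nat_cond big1 ?add0r; last first.
  by move=> i /andP[/andP[_ ia]]; rewrite leqNgt ia.
rewrite big_nat_cond (eq_bigl (fun i => (a <= i < s)%N && true)); last first.
  by move=> i /=; rewrite andbT; case: (a <= i)%N; rewrite /= ?andbT.
rewrite -big_nat_cond (big_addn 0 s a).
have hsz : size u = n.-1 by rewrite hu size_takel ?size_drop ?size_tuple; lia.
have -> : (s - a = size u)%N by rewrite hsz; lia.
rewrite (Pf_sum _ _ x0) scaler_sumr; apply: eq_big_nat => i /andP[_ hi].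
rewrite scalerA -!exprVn -exprD addnC addSn.
by rewrite hu nth_take ?nth_drop // -hsz.
Qed.

Theorem lemmaB12 (R : realType) (Gamma : finType) (n : nat) (hn : (2 <= n)%N)
  (enc : (n.-1).-tuple Gamma -> 'I_(#|Gamma| ^ n.-1)) (henc : bijective enc) :
  exists M : mlp R #|Gamma| (#|Gamma| ^ n.-1),
    forall (T : nat) (w : T.-tuple Gamma) (s : nat),
      (n.-1 <= s)%N -> (s <= T)%N ->
      forall u : (n.-1).-tuple Gamma,
        val u = take n.-1 (drop (s.+1 - n) w) ->
        mlp_eval M (l1normalize (attnA R n w s)) = onehot R (enc u).
Proof.
case: henc => dec encK decK.
pose p := fun u : (n.-1).-tuple Gamma => l1normalize (Pf R Gamma (val u)).
have pinj : injective p.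
  move=> u u' E; apply: val_inj; apply: (Pf_inj R); first by rewrite !size_tuple.
  have L : l1norm (Pf R Gamma (val u)) = l1norm (Pf R Gamma (val u')).
    by rewrite !l1_Pf; apply: sumE_size; rewrite !size_tuple.
  have Lpos : 0 < l1norm (Pf R Gamma (val u')).
    rewrite l1_Pf; apply: sumE_pos => h.
    by have := size_tuple u'; rewrite h /=; lia.
  move: E; rewrite /p /l1normalize L => /(congr1 (fun v => l1norm (Pf R Gamma (val u')) *: v)).
  by rewrite !scalerA mulfV ?scale1r // lt0r_neq0.
have [M HM] := @interp _ _ _ _ p pinj dec.
exists M => T w s h1 h2 u hu.
rewrite (@attn_Pf R Gamma n T w s (val u) hn h1 h2 hu) l1normalizeZ; last first.
  rewrite mulr_gt0 // invr_gt0 ?exprn_gt0 ?ltr0n //; lia.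
  apply/matrixP => j k; rewrite (ord1 k) (HM u j) /onehot mxE.
have -> : (dec j == u) = (j == enc u) by apply/eqP/eqP => [<-|->]; [rewrite decK | rewrite encK].
done.
Qed.
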